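(* Let $\mathcal{F}=\{i_{\alpha\beta}:\alpha\le\beta<\lambda\}$ be a complete iteration system and let $A\subseteq T(\mathcal{F})$ be an antichain such that for some $\alpha<\lambda$ the set $\{f(\alpha):f\in A\}$ is an antichain in $\mathbb{B}_\alpha$ (with $f\mapsto f(\alpha)$ injective on $A$). Then the pointwise supremum $\tilde\bigvee A$ is the supremum of $A$ in ${\sf RO}(T(\mathcal{F}))$.
   Context: A complete iteration system of length $\lambda$ (a limit ordinal) is a family $\mathcal{F}=\{i_{\alpha\beta}:\mathbb{B}_\alpha\to\mathbb{B}_\beta:\alpha\le\beta<\lambda\}$ where each $\mathbb{B}_\alpha$ is a complete Boolean algebra, $i_{\alpha\alpha}$ is the identity, each $i_{\alpha\beta}$ is a regular embedding (injective complete homomorphism) with retraction $\pi_{\alpha\beta}(c)=\bigwedge\{b: i_{\alpha\beta}(b)\ge c\}$, and $i_{\beta\gamma}\circ i_{\alpha\beta}=i_{\alpha\gamma}$. $T(\mathcal{F})$ is the set of threads $f\in\prod_{\alpha<\lambda}\mathbb{B}_\alpha$ with $\pi_{\alpha\beta}(f(\beta))=f(\alpha)$ for all $\alpha\le\beta<\lambda$, ordered pointwise (as a forcing poset the zero thread is removed). For $A\subseteq T(\mathcal{F})$ the pointwise supremum $\tilde\bigvee A$ is the thread $\alpha\mapsto\bigvee\{f(\alpha):f\in A\}$. ${\sf RO}(P)$ denotes the Boolean completion of a poset $P$, into which $P$ embeds densely. *)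

(* Defs.v *)
From Stdlib Require Import Classical.

Record CBA := {
  cb :> Type;
  cle : cb -> cb -> Prop;
  csup : (cb -> Prop) -> cb;
  cinf : (cb -> Prop) -> cb;
  ccompl : cb -> cb;
  cle_refl : forall x, cle x x;
  cle_trans : forall x y z, cle x y -> cle y z -> cle x z;
  cle_antisym : forall x y, cle x y -> cle y x -> x = y;
  csup_ub : forall S x, S x -> cle x (csup S);
  csup_least : forall S y, (forall x, S x -> cle x y) -> cle (csup S) y;
  cinf_lb : forall S x, S x -> cle (cinf S) x;
  cinf_greatest : forall S y, (forall x, S x -> cle y x) -> cle y (cinf S);
  cdistr : forall x y z,
    cinf (fun w => w = x \/ w = csup (fun v => v = y \/ v = z)) =
    csup (fun v => v = cinf (fun w => w = x \/ w = y) \/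
                   v = cinf (fun w => w = x \/ w = z));
  ccompl_meet : forall x,
    cinf (fun w => w = x \/ w = ccompl x) = csup (fun _ => False);
  ccompl_join : forall x,
    csup (fun w => w = x \/ w = ccompl x) = cinf (fun _ => False)
}.

Arguments cle {c}.
Arguments csup {c}.
Arguments cinf {c}.
Arguments ccompl {c}.

Definition cbot (B : CBA) : B := csup (fun _ => False).
Definition cmeet {B : CBA} (x y : B) : B := cinf (fun w => w = x \/ w = y).

Definition complete_hom {B1 B2 : CBA} (h : B1 -> B2) : Prop :=
  (forall S, h (csup S) = csup (fun y => exists x, S x /\ h x = y)) /\
  (forall S, h (cinf S) = cinf (fun y => exists x, S x /\ h x = y)) /\
  (forall x, h (ccompl x) = ccompl (h x)).

Definition regular_embedding {B1 B2 : CBA} (h : B1 -> B2) : Prop :=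
  complete_hom h /\ (forall x y, h x = h y -> x = y).

Definition retraction {B1 B2 : CBA} (h : B1 -> B2) (c : B2) : B1 :=
  cinf (fun b => cle c (h b)).

(** * Limit ordinals, represented by a well-ordered index type
    (the set of ordinals below lambda) which is nonempty and has no maximum. *)
Record LimOrd := {
  ix :> Type;
  ilt : ix -> ix -> Prop;
  ilt_irrefl : forall a, ~ ilt a a;
  ilt_trans : forall a b c, ilt a b -> ilt b c -> ilt a c;
  ilt_total : forall a b, ilt a b \/ a = b \/ ilt b a;
  ilt_wf : well_founded ilt;
  ix_inhabited : inhabited ix;
  ix_nomax : forall a, exists b, ilt a b
}.
Arguments ilt {l}.

Definition ile {L : LimOrd} (a b : L) : Prop := ilt a b \/ a = b.

Record CIS (L : LimOrd) := {
  alg : L -> CBA;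
  emb : forall a b : L, alg a -> alg b;
  emb_id : forall a (x : alg a), emb a a x = x;
  emb_reg : forall a b, ile a b -> regular_embedding (emb a b);
  emb_comp : forall a b c (x : alg a), ile a b -> ile b c ->
    emb b c (emb a b x) = emb a c x
}.
Arguments alg {L}.
Arguments emb {L}.

Definition proj {L} (F : CIS L) (a b : L) : alg F b -> alg F a :=
  retraction (emb F a b).

Definition is_thread {L} (F : CIS L) (f : forall a, alg F a) : Prop :=
  forall a b, ile a b -> proj F a b (f b) = f a.

Record thread {L} (F : CIS L) := {
  tf :> forall a, alg F a;
  tf_thread : is_thread F tf
}.
Arguments tf {L F}.

Definition tle {L} {F : CIS L} (f g : forall a, alg F a) : Prop :=
  forall a, cle (f a) (g a).

(** nonzero threads: the forcing poset T(F) minus the zero thread *)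
Definition nonzero {L} {F : CIS L} (f : thread F) : Prop :=
  exists a, f a <> cbot (alg F a).

Definition compat {L} {F : CIS L} (f : thread F) (g : forall a, alg F a) : Prop :=
  exists s : thread F, nonzero s /\ tle s f /\ tle s g.

Definition antichain {L} {F : CIS L} (A : thread F -> Prop) : Prop :=
  (forall f, A f -> nonzero f) /\
  (forall f g, A f -> A g -> f <> g -> ~ compat f g).

Definition psup {L} {F : CIS L} (A : thread F -> Prop) : forall a, alg F a :=
  fun a => csup (fun x => exists f, A f /\ tf f a = x).

(** * RO(P) for P = nonzero threads: regular open subsets (w.r.t. the
    down-set topology), ordered by inclusion, with the dense embedding
    p |-> int cl (down p). *)
Definition roset {L} (F : CIS L) := thread F -> Prop.

Definition regular_open {L} {F : CIS L} (U : roset F) : Prop :=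
  forall q, U q <->
    (nonzero q /\ forall r, nonzero r -> tle r q ->
       exists s, nonzero s /\ tle s r /\ U s).

Definition ro_emb {L} {F : CIS L} (g : forall a, alg F a) : roset F :=
  fun q => nonzero q /\ forall r, nonzero r -> tle r q -> compat r g.

Definition subset {L} {F : CIS L} (U V : roset F) : Prop := forall q, U q -> V q.

Definition is_sup_in_RO {L} {F : CIS L} (A : thread F -> Prop) (g : forall a, alg F a) : Prop :=
  regular_open (ro_emb g) /\
  (forall f, A f -> subset (ro_emb (tf f)) (ro_emb g)) /\
  (forall U, regular_open U -> (forall f, A f -> subset (ro_emb (tf f)) U) ->
     subset (ro_emb g) U).

(* Main.v *)
Require Import Defs.
From Stdlib Require Import Classical.

Definition cjoin {B : CBA} (x y : B) : B := csup (fun v => v = x \/ v = y).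
Definition ctop (B : CBA) : B := cinf (fun _ => False).

Lemma bot_le (B : CBA) (x : B) : cle (cbot B) x.
Proof. unfold cbot; apply csup_least; intros _ []. Qed.
Lemma le_bot (B : CBA) (x : B) : cle x (cbot B) -> x = cbot B.
Proof. intros H; apply cle_antisym; auto using bot_le. Qed.
Lemma le_top (B : CBA) (x : B) : cle x (ctop B).
Proof. unfold ctop; apply cinf_greatest; intros _ []. Qed.
Lemma meet_l (B : CBA) (x y : B) : cle (cmeet x y) x.
Proof. apply cinf_lb; left; auto. Qed.
Lemma meet_r (B : CBA) (x y : B) : cle (cmeet x y) y.
Proof. apply cinf_lb; right; auto. Qed.
Lemma meet_glb (B : CBA) (z x y : B) : cle z x -> cle z y -> cle z (cmeet x y).
Proof. intros; apply cinf_greatest; intros w [-> | ->]; auto. Qed.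
Lemma join_l (B : CBA) (x y : B) : cle x (cjoin x y).
Proof. apply csup_ub; left; auto. Qed.
Lemma join_r (B : CBA) (x y : B) : cle y (cjoin x y).
Proof. apply csup_ub; right; auto. Qed.
Lemma join_lub (B : CBA) (z x y : B) : cle x z -> cle y z -> cle (cjoin x y) z.
Proof. intros; apply csup_least; intros w [-> | ->]; auto. Qed.
Lemma meet_compl (B : CBA) (x : B) : cmeet x (ccompl x) = cbot B.
Proof. apply ccompl_meet. Qed.
Lemma join_compl (B : CBA) (x : B) : cjoin x (ccompl x) = ctop B.
Proof. apply ccompl_join. Qed.
Lemma distr (B : CBA) (x y z : B) :
  cmeet x (cjoin y z) = cjoin (cmeet x y) (cmeet x z).
Proof. apply cdistr. Qed.

Lemma key1 (B : CBA) (p x : B) : cle (cmeet (cjoin p (ccompl x)) x) p.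
Proof.
  apply cle_trans with (cmeet x (cjoin p (ccompl x))).
  - apply meet_glb; [apply meet_r | apply meet_l].
  - rewrite distr. apply join_lub. apply meet_r. rewrite meet_compl; apply bot_le.
Qed.

Lemma key2 (B : CBA) (s x : B) : cle s (cjoin (cmeet x s) (ccompl x)).
Proof.
  apply cle_trans with (cmeet s (cjoin x (ccompl x))).
  - apply meet_glb. apply cle_refl. rewrite join_compl; apply le_top.
  - rewrite distr. apply join_lub.
    + apply cle_trans with (cmeet x s). apply meet_glb; [apply meet_r|apply meet_l].
      apply join_l.
    + apply cle_trans with (ccompl x). apply meet_r. apply join_r.
Qed.

Lemma inf_distr (B : CBA) (x : B) (S : B -> Prop) :
  cle (cmeet x (csup S)) (csup (fun v => exists s, S s /\ v = cmeet x s)).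
Proof.
  set (y := csup (fun v => exists s, S s /\ v = cmeet x s)).
  assert (H : cle (csup S) (cjoin y (ccompl x))).
  { apply csup_least; intros s Hs.
    apply cle_trans with (cjoin (cmeet x s) (ccompl x)). apply key2.
    apply join_lub. apply cle_trans with y. apply csup_ub; exists s; auto. apply join_l.
    apply join_r. }
  apply cle_trans with (cmeet (cjoin y (ccompl x)) x).
  - apply meet_glb. apply cle_trans with (csup S). apply meet_r. exact H. apply meet_l.
  - apply key1.
Qed.

Lemma hom_meet (B1 B2 : CBA) (h : B1 -> B2) : complete_hom h ->
  forall x y, h (cmeet x y) = cmeet (h x) (h y).
Proof.
  intros [_ [Hi _]] x y. unfold cmeet at 1. rewrite Hi.
  apply cle_antisym.
  - apply meet_glb; apply cinf_lb; eauto.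
  - apply cinf_greatest; intros z [w [[-> | ->] <-]]; [apply meet_l | apply meet_r].
Qed.

Lemma hom_mono (B1 B2 : CBA) (h : B1 -> B2) : complete_hom h ->
  forall x y, cle x y -> cle (h x) (h y).
Proof.
  intros Hh x y Hxy.
  assert (E : cmeet x y = x).
  { apply cle_antisym. apply meet_l. apply meet_glb; auto using cle_refl. }
  rewrite <- E, hom_meet by exact Hh. apply meet_r.
Qed.

Lemma hom_join (B1 B2 : CBA) (h : B1 -> B2) : complete_hom h ->
  forall x y, h (cjoin x y) = cjoin (h x) (h y).
Proof.
  intros Hh x y. apply cle_antisym.
  - destruct Hh as [Hs _]. unfold cjoin at 1. rewrite Hs.
    apply csup_least; intros z [w [[-> | ->] <-]]; [apply join_l | apply join_r].
  - apply join_lub; apply (hom_mono _ _ h Hh); [apply join_l | apply join_r].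
Qed.

Lemma hom_bot (B1 B2 : CBA) (h : B1 -> B2) : complete_hom h -> h (cbot B1) = cbot B2.
Proof.
  intros [Hs _]. unfold cbot at 1. rewrite Hs. apply le_bot.
  apply csup_least; intros z [w [[] _]].
Qed.

Lemma ret_unit (B1 B2 : CBA) (h : B1 -> B2) : complete_hom h ->
  forall c, cle c (h (retraction h c)).
Proof.
  intros [_ [Hi _]] c. unfold retraction. rewrite Hi.
  apply cinf_greatest; intros z [w [Hw <-]]; exact Hw.
Qed.

Lemma ret_adj2 (B1 B2 : CBA) (h : B1 -> B2) c b :
  cle c (h b) -> cle (retraction h c) b.
Proof. intros H; apply cinf_lb; exact H. Qed.

Lemma ret_mono (B1 B2 : CBA) (h : B1 -> B2) : complete_hom h ->
  forall c c', cle c c' -> cle (retraction h c) (retraction h c').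
Proof.
  intros Hh c c' H. apply ret_adj2. eapply cle_trans. exact H. apply ret_unit; auto.
Qed.

Lemma ret_meet_emb (B1 B2 : CBA) (h : B1 -> B2) : complete_hom h ->
  forall c x, retraction h (cmeet c (h x)) = cmeet (retraction h c) x.
Proof.
  intros Hh c x. apply cle_antisym.
  - apply meet_glb. apply ret_mono; auto; apply meet_l.
    apply ret_adj2. apply meet_r.
  - set (p := retraction h (cmeet c (h x))).
    assert (H : cle (retraction h c) (cjoin p (ccompl x))).
    { apply ret_adj2. eapply cle_trans. apply (key2 _ c (h x)).
      rewrite (hom_join _ _ h Hh). destruct Hh as [A [B C]]. rewrite C.
      apply join_lub.
      - eapply cle_trans. 2: apply join_l.
        eapply cle_trans. 2: apply (ret_unit _ _ h (conj A (conj B C))).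
        apply meet_glb; [apply meet_r|apply meet_l].
      - apply join_r. }
    eapply cle_trans. 2: apply (key1 _ p x).
    apply meet_glb. eapply cle_trans. apply meet_l. exact H. apply meet_r.
Qed.

Lemma ret_zero (B1 B2 : CBA) (h : B1 -> B2) : complete_hom h ->
  forall c, retraction h c = cbot B1 -> c = cbot B2.
Proof.
  intros Hh c E. apply le_bot. eapply cle_trans. apply (ret_unit _ _ h Hh).
  rewrite E, hom_bot by exact Hh. apply cle_refl.
Qed.

Lemma ret_bot (B1 B2 : CBA) (h : B1 -> B2) : complete_hom h ->
  retraction h (cbot B2) = cbot B1.
Proof. intros Hh. apply le_bot, ret_adj2, bot_le. Qed.

Lemma ile_refl (L : LimOrd) (a : L) : ile a a.
Proof. right; auto. Qed.
Lemma ile_trans (L : LimOrd) (a b c : L) : ile a b -> ile b c -> ile a c.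
Proof.
  intros [H1 | <-] [H2 | <-]; unfold ile; auto.
  left; eapply ilt_trans; eauto.
Qed.
Lemma ile_total (L : LimOrd) (a b : L) : ile a b \/ ile b a.
Proof.
  destruct (ilt_total L a b) as [H | [H | H]]; unfold ile; auto.
Qed.

Lemma chom (L : LimOrd) (F : CIS L) a b : ile a b -> complete_hom (emb F a b).
Proof. intros H; exact (proj1 (@emb_reg _ F a b H)). Qed.

Lemma proj_id (L : LimOrd) (F : CIS L) a (c : alg F a) : proj F a a c = c.
Proof.
  unfold proj. apply cle_antisym.
  - apply ret_adj2. rewrite emb_id. apply cle_refl.
  - eapply cle_trans. apply (ret_unit _ _ _ (chom L F a a (ile_refl _ a))).
    rewrite emb_id. apply cle_refl.
Qed.

Lemma proj_comp (L : LimOrd) (F : CIS L) b g m (c : alg F m) :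
  ile b g -> ile g m -> proj F b g (proj F g m c) = proj F b m c.
Proof.
  intros Hbg Hgm. unfold proj. apply cle_antisym.
  - apply ret_adj2. apply ret_adj2. rewrite emb_comp by auto.
    apply ret_unit, chom, (ile_trans _ _ _ _ Hbg Hgm).
  - apply ret_adj2. rewrite <- emb_comp with (b := g) by auto.
    eapply cle_trans. apply (ret_unit _ _ _ (chom L F g m Hgm)).
    apply hom_mono. apply chom; auto.
    apply ret_unit, chom; auto.
Qed.

Lemma thread_zero (L : LimOrd) (F : CIS L) (t : thread F) a :
  t a = cbot (alg F a) -> forall b, t b = cbot (alg F b).
Proof.
  intros E b. destruct (ile_total _ a b) as [H | H].
  - apply (ret_zero _ _ _ (chom L F a b H)).
    change (proj F a b (t b) = cbot (alg F a)). rewrite (tf_thread _ t a b H). exact E.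
  - rewrite <- (tf_thread _ t b a H), E. apply ret_bot, chom; auto.
Qed.

Lemma restrict_thread (L : LimOrd) (F : CIS L) (t : thread F) alpha (b : alg F alpha) :
  exists s : thread F,
    (forall be, cle (s be) (t be)) /\
    (forall be m, ile alpha m -> ile be m ->
       s be = proj F be m (cmeet (t m) (emb F alpha m b))).
Proof.
  set (X := fun m => cmeet (t m) (emb F alpha m b)).
  assert (HX : forall m m', ile alpha m -> ile m m' -> proj F m m' (X m') = X m).
  { intros m m' H1 H2. unfold X.
    rewrite <- (emb_comp L F alpha m m' b H1 H2).
    unfold proj. rewrite ret_meet_emb by (apply chom; auto).
    change (cmeet (proj F m m' (t m')) (emb F alpha m b) = cmeet (t m) (emb F alpha m b)).
    rewrite (tf_thread _ t m m' H2). reflexivity. }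
  set (sf := fun be => csup (fun x => exists m, ile alpha m /\ ile be m /\ x = proj F be m (X m))).
  assert (Hsf : forall be m, ile alpha m -> ile be m -> sf be = proj F be m (X m)).
  { intros be m H1 H2. apply cle_antisym.
    - apply csup_least; intros x [m' [H1' [H2' ->]]].
      destruct (ile_total _ m m') as [H | H].
      + rewrite <- (HX m m' H1 H), proj_comp by auto. apply cle_refl.
      + rewrite <- (HX m' m H1' H), proj_comp by auto. apply cle_refl.
    - apply csup_ub. exists m; auto. }
  assert (Hex : forall be, exists m, ile alpha m /\ ile be m).
  { intros be. destruct (ile_total _ alpha be) as [H | H].
    exists be; split; auto using ile_refl. exists alpha; split; auto using ile_refl. }
  assert (Hth : is_thread F sf).
  { intros be g Hbg. destruct (Hex g) as [m [H1 H2]].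
    rewrite (Hsf g m H1 H2), (Hsf be m H1 (ile_trans _ _ _ _ Hbg H2)).
    apply proj_comp; auto. }
  exists {| tf := sf; tf_thread := Hth |}. simpl. split.
  - intros be. destruct (Hex be) as [m [H1 H2]]. rewrite (Hsf be m H1 H2).
    rewrite <- (tf_thread _ t be m H2). apply ret_mono. apply chom; auto. apply meet_l.
  - exact Hsf.
Qed.

Theorem lemma3p8 (L : LimOrd) (F : CIS L) (A : thread F -> Prop)
  (hA : antichain A)
  (alpha : L)
  (hinj : forall f g, A f -> A g -> tf f alpha = tf g alpha -> f = g)
  (hanti : forall f g, A f -> A g -> f <> g ->
     cmeet (tf f alpha) (tf g alpha) = cbot (alg F alpha)) :
  is_thread F (psup A) /\ is_sup_in_RO A (psup A).
Proof.
  split.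
  { intros a b hab. unfold proj, psup. apply cle_antisym.
    - apply ret_adj2. apply csup_least; intros x [h [Hh <-]].
      eapply cle_trans. apply (ret_unit _ _ _ (chom L F a b hab)).
      apply hom_mono. apply chom; auto.
      change (cle (proj F a b (h b)) (csup (fun x => exists f, A f /\ tf f a = x))).
      rewrite (tf_thread _ h a b hab). apply csup_ub; eauto.
    - apply csup_least; intros x [h [Hh <-]].
      rewrite <- (tf_thread _ h a b hab). apply ret_mono. apply chom; auto.
      apply csup_ub; eauto. }
  split; [| split].
  -
    intros q; split.
    + intros [Hq Hall]. split; auto. intros r Hr Hrq. exists r. split; auto.
      split. intros a; apply cle_refl.
      split; auto. intros r' Hr' Hr'r. apply Hall; auto.
      intros a; eapply cle_trans; eauto.
    + intros [Hq Hall]. split; auto. intros r Hr Hrq.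
      destruct (Hall r Hr Hrq) as [s [Hs [Hsr [_ Hs2]]]].
      destruct (Hs2 s Hs (fun a => cle_refl _ _)) as [u [Hu [Hus Hug]]].
      exists u. split; auto. split; auto. intros a; eapply cle_trans; eauto.
  - intros f Hf q [Hq Hall]. split; auto. intros r Hr Hrq.
    destruct (Hall r Hr Hrq) as [s [Hs [Hsr Hsf]]].
    exists s. split; auto. split; auto. intros a.
    eapply cle_trans. apply Hsf. apply csup_ub; eauto.
  - intros U HU Hsub q [Hq Hall]. apply HU. split; auto.
    intros r Hr Hrq.
    destruct (Hall r Hr Hrq) as [t [Ht [Htr Htg]]].
    assert (Hf : exists f, A f /\ cmeet (t alpha) (tf f alpha) <> cbot (alg F alpha)).
    { apply NNPP; intros Hn.
      assert (E : t alpha = cbot (alg F alpha)).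
      { apply le_bot. eapply cle_trans. apply (meet_glb _ _ _ _ (cle_refl _ _) (Htg alpha)).
        eapply cle_trans. apply inf_distr. apply csup_least.
        intros v [s [[f [Hf <-]] ->]].
        destruct (classic (cmeet (t alpha) (tf f alpha) = cbot (alg F alpha))) as [E | E].
        rewrite E; apply cle_refl. exfalso; apply Hn; eauto. }
      destruct Ht as [a Ha]. apply Ha. apply (thread_zero _ _ t alpha E). }
    destruct Hf as [f [Hf Hnz]].
    destruct (restrict_thread L F t alpha (tf f alpha)) as [s [Hst Hs]].
    assert (Key : forall m, ile alpha m ->
      cle (cmeet (t m) (emb F alpha m (tf f alpha))) (tf f m)).
    { intros m Hm.
      eapply cle_trans. apply (meet_glb _ _ (emb F alpha m (tf f alpha)) (psup A m)).
      apply meet_r. eapply cle_trans. apply meet_l. apply Htg.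
      eapply cle_trans. apply inf_distr. apply csup_least.
      intros v [w [[h [Hh <-]] ->]].
      destruct (classic (h = f)) as [-> | Hne].
      - apply meet_r.
      - assert (Hhm : cle (tf h m) (emb F alpha m (tf h alpha))).
        { rewrite <- (tf_thread _ h alpha m Hm).
          apply ret_unit, chom; auto. }
        eapply cle_trans. 2: apply (bot_le _ (tf f m)).
        rewrite <- (hom_bot _ _ _ (chom L F alpha m Hm)).
        rewrite <- (hanti f h Hf Hh (fun e => Hne (eq_sym e))).
        rewrite (hom_meet _ _ _ (chom L F alpha m Hm)).
        apply meet_glb. apply meet_l. eapply cle_trans. apply meet_r. exact Hhm. }
    assert (Hsnz : nonzero s).
    { exists alpha. rewrite (Hs alpha alpha (ile_refl _ _) (ile_refl _ _)).
      rewrite proj_id, emb_id. exact Hnz. }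
    assert (Hsf : tle s (tf f)).
    { intros be. destruct (ile_total _ alpha be) as [H | H].
      - rewrite (Hs be be H (ile_refl _ _)), proj_id. apply Key; auto.
      - rewrite (Hs be alpha (ile_refl _ _) H). rewrite emb_id.
        rewrite <- (tf_thread _ f be alpha H). apply ret_mono. apply chom; auto.
        apply meet_r. }
    exists s. split; auto. split.
    + intros a. eapply cle_trans. apply Hst. eapply cle_trans. apply Htr. apply cle_refl.
    + apply (Hsub f Hf). split; auto. intros r' Hr' Hr's.
      exists r'. split; auto. split. intros a; apply cle_refl.
      intros a; eapply cle_trans; eauto.
Qed.
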